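(* Let $n\ge1$ and $a_0,a_1,b_0,b_1\in R$. The sections $s_0=a_0(x^n,z^n)^T+a_1(y^n,w^n)^T$ and $s_1=b_0(x^n,z^n)^T+b_1(y^n,w^n)^T$ generate $\mathcal{P}_n$ if and only if there exist $U_x,V_x,U_w,V_w\in R$ with $$U_x(x^na_0+y^na_1)+V_x(x^nb_0+y^nb_1)+U_w(z^na_0+w^na_1)+V_w(z^nb_0+w^nb_1)=1.$$ Similarly, the sections $s_0=a_0(x^n,y^n)^T+a_1(z^n,w^n)^T$ and $s_1=b_0(x^n,y^n)^T+b_1(z^n,w^n)^T$ generate $\mathcal{Q}_n$ if and only if there exist $U_x,V_x,U_w,V_w\in R$ with $$U_x(x^na_0+z^na_1)+V_x(x^nb_0+z^nb_1)+U_w(y^na_0+w^na_1)+V_w(y^nb_0+w^nb_1)=1.$$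
   Context: Let $k$ be a field and $R=k[x,y,z,w]/(x+w-1,\,xw-yz)$. For $n\ge1$ let $\mathcal{P}_n\subseteq R^2$ be the $R$-submodule generated by $(x^n,z^n)^T$ and $(y^n,w^n)^T$, and $\mathcal{Q}_n\subseteq R^2$ the submodule generated by $(x^n,y^n)^T$ and $(z^n,w^n)^T$. ''Generate'' means the two sections generate the $R$-module. *)

(* Defs.v *)
(* R = k[x,y,z,w]/(x+w-1, xw-yz) built as the quotient of
   {mpoly k[4]} by the (classically decided) ideal generated by the two relations. *)
From HB Require Import structures.
From mathcomp Require Import all_boot all_order all_algebra.
From mathcomp Require Import generic_quotient ring_quotient.
From mathcomp Require Import mpoly.
From Stdlib Require Import ClassicalEpsilon.
Set Implicit Arguments.
Unset Strict Implicit.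
Unset Printing Implicit Defensive.
Import GRing.Theory.
Local Open Scope ring_scope.
Local Open Scope quotient_scope.

Section Ring.
Variable k : fieldType.
Local Notation P := {mpoly k[4]}.

Definition px : P := 'X_(@Ordinal 4 0 isT).
Definition py : P := 'X_(@Ordinal 4 1 isT).
Definition pz : P := 'X_(@Ordinal 4 2 isT).
Definition pw : P := 'X_(@Ordinal 4 3 isT).

Definition in_relI (p : P) : Prop :=
  exists q1 q2 : P, p = q1 * (px + pw - 1) + q2 * (px * pw - py * pz).

Definition relI : pred P :=
  fun p => if excluded_middle_informative (in_relI p) then true else false.

Lemma relIP p : reflect (in_relI p) (p \in relI).
Proof.
rewrite unfold_in /relI; case: excluded_middle_informative => h.
  by apply: ReflectT. by apply: ReflectF.
Qed.

Lemma relI_closed : idealr_closed relI.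
Proof.
split.
- by apply/relIP; exists 0, 0; rewrite !mul0r addr0.
- apply/relIP => -[q1 [q2 e]].
  pose v : 'I_4 -> k := fun i => if val i == 0%N then 1 else 0.
  have := congr1 (meval v) e.
  rewrite meval1 mevalD !mevalM !mevalB mevalD meval1 !mevalM !mevalXU /v /=.
  rewrite ?(mul0r,mulr0,add0r,addr0,mul1r,mulr1,subrr,subr0) => /eqP.
  by rewrite oppr0 mulr0 oner_eq0.
- move=> a u v /relIP [q1 [q2 eu]] /relIP [r1 [r2 ev]]; apply/relIP.
  exists (a * q1 + r1), (a * q2 + r2); rewrite eu ev.
  by rewrite !mulrDl !mulrDr !mulrA; rewrite addrACA.
Qed.

HB.instance Definition _ := isIdealr.Build P relI relI_closed.

End Ring.

Definition Rq (k : fieldType) := {ideal_quot (@relI k : idealr _)}.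
HB.instance Definition _ (k : fieldType) := GRing.ComNzRing.on (Rq k).
HB.instance Definition _ (k : fieldType) := EqQuotient.on (Rq k).

Definition xq (k : fieldType) : Rq k := \pi_(Rq k) (@px k).
Definition yq (k : fieldType) : Rq k := \pi_(Rq k) (@py k).
Definition zq (k : fieldType) : Rq k := \pi_(Rq k) (@pz k).
Definition wq (k : fieldType) : Rq k := \pi_(Rq k) (@pw k).

Definition vec2 (A : comNzRingType) (a b : A) : 'cV[A]_2 :=
  \col_(i < 2) (if val i == 0%N then a else b).

Definition span2 (A : comNzRingType) (u v : 'cV[A]_2) : 'cV[A]_2 -> Prop :=
  fun t => exists c d : A, t = c *: u + d *: v.

Definition generates2 (A : comNzRingType) (s0 s1 u v : 'cV[A]_2) : Prop :=
  forall t, span2 s0 s1 t <-> span2 u v t.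

Definition Pgen1 k n := vec2 (xq k ^+ n) (zq k ^+ n).
Definition Pgen2 k n := vec2 (yq k ^+ n) (wq k ^+ n).
Definition Qgen1 k n := vec2 (xq k ^+ n) (yq k ^+ n).
Definition Qgen2 k n := vec2 (zq k ^+ n) (wq k ^+ n).

(* Main.v *)
Require Import Defs.
From HB Require Import structures.
From mathcomp Require Import all_boot all_order all_algebra.
From mathcomp Require Import generic_quotient ring_quotient mpoly.
From mathcomp Require Import ring zify.
Import GRing.Theory.
Local Open Scope ring_scope.
Local Open Scope quotient_scope.

Lemma xw_yz (k : fieldType) : xq k * wq k = yq k * zq k.
Proof.
rewrite /xq /wq /yq /zq -!rmorphM; apply/eqP.
rewrite -Quotient.idealrBE; apply/relIP; exists 0, 1; ring.
Qed.

Lemma xw1 (k : fieldType) : xq k + wq k = 1.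
Proof.
rewrite /xq /wq -rmorphD -(rmorph1 (\pi_(Rq k))); apply/eqP.
rewrite -Quotient.idealrBE; apply/relIP; exists 1, 0; ring.
Qed.
Lemma comax_pow (A : comNzRingType) (x w : A) (n : nat) :
  x + w = 1 -> exists p q : A, p * x ^+ n + q * w ^+ n = 1.
Proof.
move=> xw.
have := exprDn x w (n + n); rewrite xw expr1n => E.
pose f (i : 'I_(n + n).+1) : A :=
  if (i <= n)%N then (x ^+ (n - i) * w ^+ i) *+ 'C(n + n, i) else 0.
pose g (i : 'I_(n + n).+1) : A :=
  if (i <= n)%N then 0 else (x ^+ (n + n - i) * w ^+ (i - n)) *+ 'C(n + n, i).
exists (\sum_i f i), (\sum_i g i).
rewrite E !mulr_suml -big_split /=; apply: eq_bigr => i _.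
rewrite /f /g; case: leqP => hi; rewrite mul0r ?addr0 ?add0r.
  have -> : (n + n - i = (n - i) + n)%N by lia.
  by rewrite exprD !mulrnAl; congr (_ *+ _); ring.
have -> : w ^+ i = w ^+ (i - n) * w ^+ n by rewrite -exprD subnK // ltnW.
by rewrite !mulrnAl; congr (_ *+ _); ring.
Qed.

Lemma cV2_eq (A : comNzRingType) (t t' : 'cV[A]_2) :
  t 0 0 = t' 0 0 -> t 1 0 = t' 1 0 -> t = t'.
Proof.
move=> h0 h1; apply/matrixP => i j; rewrite (ord1 j).
case: i => -[|[|//]] hi.
  by have -> : Ordinal hi = 0 by apply: val_inj.
by have -> : Ordinal hi = 1 by apply: val_inj.
Qed.

Lemma gen_lemma (A : comNzRingType) (u0 u1 v0 v1 a0 a1 b0 b1 : A) :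
  u0 * v1 = v0 * u1 -> (exists p q : A, p * u0 + q * v1 = 1) ->
  (generates2 (a0 *: vec2 u0 u1 + a1 *: vec2 v0 v1)
              (b0 *: vec2 u0 u1 + b1 *: vec2 v0 v1) (vec2 u0 u1) (vec2 v0 v1)
   <-> exists Ux Vx Uw Vw : A,
       Ux * (u0 * a0 + v0 * a1) + Vx * (u0 * b0 + v0 * b1)
       + Uw * (u1 * a0 + v1 * a1) + Vw * (u1 * b0 + v1 * b1) = 1).
Proof.
move=> D [p [q Hpq]]; split.
- move=> G.
  have [|c [d /(congr1 (fun t : 'cV[A]_2 => t 0 0))]] := proj2 (G (vec2 u0 u1)).
    by exists 1, 0; rewrite scale1r scale0r addr0.
  rewrite !mxE /= => Eu.
  have [|c' [d' /(congr1 (fun t : 'cV[A]_2 => t 1 0))]] := proj2 (G (vec2 v0 v1)).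
    by exists 0, 1; rewrite scale1r scale0r add0r.
  rewrite !mxE /= => Ev.
  exists (p * c), (p * d), (q * c'), (q * d').
  rewrite -Hpq; transitivity (p * (c * (a0 * u0 + a1 * v0) + d * (b0 * u0 + b1 * v0)) + q * (c' * (a0 * u1 + a1 * v1) + d' * (b0 * u1 + b1 * v1))).
    ring.
  by rewrite -Eu -Ev.
- move=> [Ux [Vx [Uw [Vw E]]]] t; split.
  + move=> [c [d ->]]; exists (c * a0 + d * b0), (c * a1 + d * b1).
    apply: cV2_eq; rewrite !mxE /=; ring.
  + move=> [c [d ->]].
    set t0 := c * u0 + d * v0. set t1 := c * u1 + d * v1.
    exists (Ux * t0 + Uw * t1), (Vx * t0 + Vw * t1).
    apply: cV2_eq; rewrite !mxE /=.
    * apply/eqP; rewrite -subr_eq0 -{1}[_ + d * _]mulr1 -E /t0 /t1.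
      apply/eqP; transitivity ((Uw * (c * a1 - d * a0) + Vw * (c * b1 - d * b0)) * (u0 * v1 - v0 * u1)).
        ring.
      by rewrite D subrr mulr0.
    * apply/eqP; rewrite -subr_eq0 -{1}[_ + d * _]mulr1 -E /t0 /t1.
      apply/eqP; transitivity ((Ux * (d * a0 - c * a1) + Vx * (d * b0 - c * b1)) * (u0 * v1 - v0 * u1)).
        ring.
      by rewrite D subrr mulr0.
Qed.

Theorem proposition2p26 (k : fieldType) (n : nat) (hn : (1 <= n)%N)
    (a0 a1 b0 b1 : Rq k) :
  let x := xq k in let y := yq k in let z := zq k in let w := wq k in
  (generates2
     (a0 *: Pgen1 k n + a1 *: Pgen2 k n) (b0 *: Pgen1 k n + b1 *: Pgen2 k n)
     (Pgen1 k n) (Pgen2 k n)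
   <-> exists Ux Vx Uw Vw : Rq k,
       Ux * (x ^+ n * a0 + y ^+ n * a1) + Vx * (x ^+ n * b0 + y ^+ n * b1)
       + Uw * (z ^+ n * a0 + w ^+ n * a1) + Vw * (z ^+ n * b0 + w ^+ n * b1)
       = 1)
  /\
  (generates2
     (a0 *: Qgen1 k n + a1 *: Qgen2 k n) (b0 *: Qgen1 k n + b1 *: Qgen2 k n)
     (Qgen1 k n) (Qgen2 k n)
   <-> exists Ux Vx Uw Vw : Rq k,
       Ux * (x ^+ n * a0 + z ^+ n * a1) + Vx * (x ^+ n * b0 + z ^+ n * b1)
       + Uw * (y ^+ n * a0 + w ^+ n * a1) + Vw * (y ^+ n * b0 + w ^+ n * b1)
       = 1).
Proof.
move=> x y z w.
have hc := @comax_pow _ _ _ n (xw1 k).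
have D : x ^+ n * w ^+ n = y ^+ n * z ^+ n by rewrite -!exprMn xw_yz.
split; apply: gen_lemma.
all: try exact: hc.
all: try exact: D.
by rewrite [LHS]D mulrC.
Qed.
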